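(* Let $k$ be a positive integer and $n = 2k^2+2$. Construct a $k$-regular bipartite graph $G$ on $n$ vertices as follows: take two vertices $x$ and $y$ and add $k$ distinct (vertex-disjoint apart from $x,y$) $k$-resistors between $x$ and $y$. Then a.a.s. (as $k\to\infty$) the random subgraph $G(p)$ does not contain a perfect matching for any $p = o(n^{-1/4})$. On the other hand, a.a.s. $G(p)$ contains no isolated vertices for any $p = \omega(\log n/\sqrt n)$.
   Context: A $k$-resistor between two vertices $x$ and $y$ is the bipartite graph with vertex set $\{x,y\}\dot\cup X'\dot\cup Y'$, where $|X'|=|Y'|=k$, with designated vertices $x'\in X'$, $y'\in Y'$, and edge set $\{xx',yy'\}\cup(\{ab : a\in X', b\in Y'\}\setminus\{x'y'\})$. $G(p)$ retains each edge of $G$ independently with probability $p$. ''A.a.s.'' means with probability tending to $1$. *)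

(* Defs.v *)
From HB Require Import structures.
From mathcomp Require Import all_boot all_order all_algebra.
From mathcomp Require Import all_classical all_reals all_analysis.
Set Implicit Arguments. Unset Strict Implicit. Unset Printing Implicit Defensive.
Import Order.TTheory GRing.Theory Num.Theory.
Local Open Scope ring_scope.

(* A simple graph on a finite vertex type T is given by its edge set
   E : {set {set T}} whose elements are 2-element sets {u,v}.
   G(p) keeps each edge independently with probability p; the
   probability that the random edge set S (S \subset E) satisfies
   the property P is the usual product-measure sum. *)
Definition gnp_prob (R : realType) (T : finType) (E : {set {set T}}) (p : R)
    (P : {set {set T}} -> bool) : R :=
  \sum_(S : {set {set T}} | (S \subset E) && P S)
     p ^+ #|S| * (1 - p) ^+ (#|E| - #|S|)%N.

Definition has_perfect_matching (T : finType) (S : {set {set T}}) : bool :=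
  [exists M : {set {set T}},
     (M \subset S) && [forall v : T, #|[set e in M | v \in e]| == 1%N]].

Definition has_isolated_vertex (T : finType) (S : {set {set T}}) : bool :=
  [exists v : T, [forall e in S, v \notin e]].

(* Vertices: inl true = x, inl false = y,
   inr (i, false, j) = j-th vertex of X'_i, inr (i, true, j) = j-th vertex of Y'_i,
   for the i-th resistor (i < k) and j < k.  The designated vertices are
   x'_i = inr (i,false,0), y'_i = inr (i,true,0). *)
Definition resV (k : nat) : finType := (bool + ('I_k * bool * 'I_k))%type.

Definition res_adj0 (k : nat) (u v : resV k) : bool :=
  match u, v with
  | inl true, inr (_, false, j) => (j : nat) == 0%N
  | inl false, inr (_, true, j) => (j : nat) == 0%N
  | inr (i, false, j), inr (i', true, j') =>
      (i == i') && ~~ (((j : nat) == 0%N) && ((j' : nat) == 0%N))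
  | _, _ => false
  end.

Definition res_adj (k : nat) (u v : resV k) : bool := res_adj0 u v || res_adj0 v u.

Definition resE (k : nat) : {set {set resV k}} :=
  [set e : {set resV k} | [exists u, exists v, res_adj u v && (e == [set u; v])]].

Definition resN (k : nat) : nat := (2 * k ^ 2 + 2)%N.

(* Main.v *)
Require Import Defs.
From HB Require Import structures.
From mathcomp Require Import all_boot all_order all_algebra.
From mathcomp Require Import all_classical all_reals all_analysis.
From mathcomp Require Import zify ring lra.
Import Order.TTheory GRing.Theory Num.Theory.

Set Implicit Arguments. Unset Strict Implicit. Unset Printing Implicit Defensive.

Lemma sum_in_card (X : finType) (A : {set X}) (P : pred X) :
  \sum_(e in A) (P e : nat) = #|[set e in A | P e]|.
Proof.
rewrite -sum1_card big_mkcond [RHS]big_mkcond /=; apply: eq_bigr => e _.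
by rewrite inE; case: (e \in A); case: (P e).
Qed.

Lemma sum_in_mul (X : finType) (A : {set X}) (P : pred X) (f : X -> nat) :
  \sum_(e in A) (P e * f e)%N = \sum_(e in [set e in A | P e]) f e.
Proof.
rewrite big_mkcond [RHS]big_mkcond /=; apply: eq_bigr => e _.
by rewrite inE; case: (e \in A); case: (P e) => //=; rewrite mul1n.
Qed.

Section Graph.
Variable k : nat.
Implicit Types (i : 'I_k) (e : {set resV k}).

Definition zo i : 'I_k := Ordinal (leq_ltn_trans (leq0n i) (ltn_ord i)).
Definition ex i : {set resV k} := [set inl true; inr (i, false, zo i)].
Definition ey i : {set resV k} := [set inl false; inr (i, true, zo i)].

Definition hc i b e : nat := \sum_(j < k) ((inr (i, b, j) : resV k) \in e : nat).

Lemma cnt_inl i b c : \sum_(j < k) ((inr (i, b, j) : resV k) == inl c : nat) = 0%N.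
Proof. by rewrite big1. Qed.

Lemma cnt_inr i b i' b' j' :
  \sum_(j < k) ((inr (i, b, j) : resV k) == inr (i', b', j') : nat) = ((i == i') && (b == b') : nat).
Proof.
rewrite (bigD1 j') //= big1 ?addn0.
  by rewrite -sum_eqE /= !xpair_eqE eqxx andbT.
by move=> j /negbTE jj; rewrite -sum_eqE /= !xpair_eqE jj andbF.
Qed.

Lemma hc2 i b u v : u != v ->
  hc i b [set u; v] = (\sum_(j < k) ((inr (i, b, j) : resV k) == u : nat) +
                       \sum_(j < k) ((inr (i, b, j) : resV k) == v : nat))%N.
Proof.
move=> uv; rewrite /hc -big_split /=; apply: eq_bigr => j _.
rewrite in_set2.
case: (boolP (_ == u)) => [/eqP eu|_]; case: (boolP (_ == v)) => [/eqP ev|_] //.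
by rewrite -eu -ev eqxx in uv.
Qed.

Lemma eq_lr b c : ((inl b : resV k) == inr c) = false. Proof. by []. Qed.
Lemma eq_rl b c : ((inr c : resV k) == inl b) = false. Proof. by []. Qed.
Lemma eq_ll b c : ((inl b : resV k) == inl c) = (b == c). Proof. by []. Qed.
Lemma eq_rr a b c a' b' c' : ((inr (a, b, c) : resV k) == inr (a', b', c')) = [&& a == a', b == b' & c == c'].
Proof. by rewrite -sum_eqE /= !xpair_eqE andbA. Qed.

Lemma edge_id i e : e \in resE k ->
  (hc i false e + (inl false \in e) * hc i true e = hc i true e + (inl true \in e) * hc i false e)%N.
Proof.
rewrite inE => /existsP [u /existsP [v /andP [uv /eqP ->]]].
move: uv; rewrite /res_adj.
case: u => [[]|[[i1 []] j1]]; case: v => [[]|[[i2 []] j2]] //=.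
all: move=> H; rewrite !hc2 ?cnt_inl ?cnt_inr ?in_set2 ?eq_lr ?eq_rl ?eq_ll ?eq_rr ?andbF ?andbT //=.
all: move: H; rewrite ?orbF => /andP [/eqP eq _]; subst.
all: by rewrite ?addn0 ?add0n ?mul0n ?addn0.
Qed.

Lemma edge_xy b e : e \in resE k -> inl b \in e ->
  exists i, e = [set inl b; inr (i, ~~ b, zo i)].
Proof.
rewrite inE => /existsP [u /existsP [v /andP [uv /eqP ->]]].
move: uv; rewrite /res_adj.
case: u => [[]|[[i1 []] j1]]; case: v => [[]|[[i2 []] j2]] //=.
all: move=> H; rewrite ?in_set2 ?eq_lr ?eq_rl ?eq_ll ?eq_rr ?orbF //=.
all: case: b => //= _.
all: move: H; rewrite ?orbF => /eqP H.
1,2: by exists i2; congr [set _; inr (_, _, _)]; apply: val_inj; rewrite /= H.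
all: by exists i1; rewrite finset.setUC; congr [set _; inr (_, _, _)]; apply: val_inj; rewrite /= H.
Qed.

Lemma pm_edges (S : {set {set resV k}}) : S \subset resE k -> has_perfect_matching S ->
  exists i, (ex i \in S) && (ey i \in S).
Proof.
move=> SE /existsP [M /andP [MS /forallP hM]].
have ME e : e \in M -> e \in resE k.
  by move=> eM; apply: (fintype.subsetP SE); apply: (fintype.subsetP MS).
have [ex0 hx] := cards1P (hM (inl true)).
have [ey0 hy] := cards1P (hM (inl false)).
have : ex0 \in [set e in M | inl true \in e] by rewrite hx set11.
rewrite inE => /andP [ex0M xin].
have : ey0 \in [set e in M | inl false \in e] by rewrite hy set11.
rewrite inE => /andP [ey0M yin].
have [i0 ex0E] := edge_xy (ME _ ex0M) xin.
have [i1 ey0E] := edge_xy (ME _ ey0M) yin.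
have key : \sum_(e in M) (hc i0 false e + (inl false \in e) * hc i0 true e)%N =
           \sum_(e in M) (hc i0 true e + (inl true \in e) * hc i0 false e)%N.
  by apply: eq_bigr => e eM; apply: edge_id; apply: ME.
have sumk b : (\sum_(e in M) hc i0 b e)%N = k.
  rewrite /hc exchange_big /= (eq_bigr (fun _ => 1%N)) ?sum1_card ?card_ord //.
  by move=> j _; rewrite sum_in_card; apply/eqP; apply: hM.
rewrite !big_split /= !sumk !sum_in_mul hx hy !big_set1 ex0E ey0E /= in key.
move: key; rewrite !hc2 ?eq_lr // !cnt_inl !cnt_inr !eqxx /= => key.
have e01 : i0 = i1 by apply/eqP; move: key; case: (i0 == i1) => //=; lia.
subst i1; exists i0; apply/andP; split.
  by apply: (fintype.subsetP MS); rewrite /ex -ex0E.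
by apply: (fintype.subsetP MS); rewrite /ey -ey0E.
Qed.

Lemma res_adj_irr (v : resV k) : res_adj v v = false.
Proof. by case: v => [[]|[[i1 []] j1]]. Qed.

Definition fv (v : resV k) (j : 'I_k) : resV k :=
  match v with
  | inl b => inr (j, ~~ b, zo j)
  | inr (i, b, j0) => if ((j0 : nat) == 0%N) && ((j : nat) == 0%N) then inl (~~ b) else inr (i, ~~ b, j)
  end.

Lemma fv_adj (v : resV k) j : res_adj v (fv v j).
Proof.
rewrite /res_adj.
case: v => [[]|[[i1 []] j1]] /=; rewrite ?eqxx //.
all: case E1: (nat_of_ord j1 == 0%N); case E2: (nat_of_ord j == 0%N) => //=; rewrite ?eqxx ?E1 ?E2 ?orbT //=.
Qed.

Lemma fv_inj (v : resV k) : injective (fv v).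
Proof.
move=> j1 j2; case: v => [b|[[i b] j0]] /=.
  by move/eqP; rewrite eq_rr => /and3P [/eqP].
case: ifP => [/andP [h0 h1]|h1]; case: ifP => [/andP [h2 h3]|h3] //.
- move=> _.
  by apply: val_inj; rewrite /= (eqP h1) (eqP h3).
- by move/eqP; rewrite eq_rr => /and3P [_ _ /eqP].
Qed.

Definition Bv (v : resV k) : {set {set resV k}} := [set [set v; fv v j] | j : 'I_k].

Lemma Bv_sub v : Bv v \subset resE k.
Proof.
apply/fintype.subsetP => e /imsetP [j _ ->]; rewrite inE.
by apply/existsP; exists v; apply/existsP; exists (fv v j); rewrite fv_adj eqxx.
Qed.

Lemma Bv_card v : #|Bv v| = k.
Proof.
rewrite card_imset ?card_ord // => j1 j2 /= h.
apply: (@fv_inj v).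
have : fv v j1 \in [set v; fv v j2] by rewrite -h set22.
rewrite in_set2 => /orP [/eqP e|/eqP //].
by have := fv_adj v j1; rewrite e res_adj_irr.
Qed.

Lemma iso_disj v (S : {set {set resV k}}) : [forall e in S, v \notin e] -> [disjoint S & Bv v].
Proof.
move/forallP => h; rewrite -setI_eq0; apply/eqP/setP => e; rewrite !inE.
apply/negP => /andP [eS /imsetP [j _ ej]].
by have := h e; rewrite eS ej set21.
Qed.
End Graph.

Local Open Scope ring_scope.

Section Prob.
Variables (R : realType) (T : finType).
Implicit Types (E A B J : {set T}).

Lemma prodAB A B (a b : R) : [disjoint A & B] ->
  \prod_e (if e \in A then a else if e \in B then b else 1) = a ^+ #|A| * b ^+ #|B|.
Proof.
move=> dAB.
rewrite (bigID (fun e => e \in A)) /=.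
rewrite (eq_bigr (fun _ => a)); last by move=> e ->.
rewrite prodr_const.
congr (_ * _).
rewrite -prodr_const big_mkcond [RHS]big_mkcond /=.
apply: eq_bigr => e _.
case eA: (e \in A) => //=.
case eB: (e \in B) => //.
by rewrite (disjointFr dAB eA) in eB.
Qed.

Lemma gnpAB (E A B : {set T}) (p : R) : A \subset E -> B \subset E -> [disjoint A & B] ->
  \sum_(S : {set T} | (S \subset E) && ((A \subset S) && [disjoint S & B]))
     p ^+ #|S| * (1 - p) ^+ (#|E| - #|S|)%N = p ^+ #|A| * (1 - p) ^+ #|B|.
Proof.
move=> AE BE dAB.
pose F e := if e \in E then (if e \in B then 0 else p) else 0.
pose G e := if e \in E then (if e \in A then 0 else 1 - p) else 1.
have H1 : \prod_e (F e + G e) = p ^+ #|A| * (1 - p) ^+ #|B|.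
  rewrite -prodAB //; apply: eq_bigr => e _; rewrite /F /G.
  case eA: (e \in A); case eB: (e \in B) => //=.
  - by rewrite (disjointFr dAB eA) in eB.
  - by rewrite (fintype.subsetP AE _ eA) addr0.
  - by rewrite (fintype.subsetP BE _ eB) add0r.
  - by case: (e \in E); rewrite ?add0r // addrC subrK.
rewrite bigA_distr in H1.
rewrite -{}H1 [LHS]big_mkcond /=.
apply: eq_bigr => J _.
case: (boolP (J \subset E)) => JE /=; last first.
  have [e eJ eE] := subsetPn JE.
  by rewrite (bigD1 e) //= eJ /F (negbTE eE) mul0r.
case: (boolP (A \subset J)) => AJ /=; last first.
  have [e eA eJ] := subsetPn AJ.
  by rewrite (bigD1 e) //= (negbTE eJ) /G (fintype.subsetP AE _ eA) eA mul0r.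
case: (boolP [disjoint J & B]) => dJB /=; last first.
  move: dJB; rewrite disjoint_subset => /subsetPn [e eJ].
  rewrite !inE negbK => eB.
  by rewrite (bigD1 e) //= eJ /F (fintype.subsetP JE _ eJ) eB mul0r.
rewrite (eq_bigr (fun e => if e \in J then p else if e \in E :\: J then 1 - p else 1)); last first.
  move=> e _; rewrite /F /G !inE.
  case eJ: (e \in J) => /=.
    by rewrite (fintype.subsetP JE _ eJ) (disjointFr dJB eJ).
  case eE: (e \in E) => //=.
  by case eA: (e \in A) => //; rewrite (fintype.subsetP AJ _ eA) in eJ.
rewrite prodAB ?cardsDS //.
by rewrite finset.disjoints_subset; apply/fintype.subsetP => e eJ; rewrite !inE eJ.
Qed.
End Prob.

Section Gnp.
Variables (R : realType) (V : finType) (E : {set {set V}}) (p : R).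
Hypothesis p01 : 0 <= p <= 1.

Lemma w_ge0 (S : {set {set V}}) : 0 <= p ^+ #|S| * (1 - p) ^+ (#|E| - #|S|)%N.
Proof. by case/andP: p01 => p0 p1; rewrite mulr_ge0 // exprn_ge0 // subr_ge0. Qed.

Lemma gnp_ge0 P : 0 <= gnp_prob E p P.
Proof. by apply: sumr_ge0 => S _; apply: w_ge0. Qed.

Lemma gnp_mono (P Q : {set {set V}} -> bool) :
  (forall S : {set {set V}}, S \subset E -> P S -> Q S) -> gnp_prob E p P <= gnp_prob E p Q.
Proof.
move=> PQ; rewrite /gnp_prob [X in X <= _]big_mkcond [X in _ <= X]big_mkcond /=.
apply: ler_sum => S _.
case SE: (S \subset E) => //=.
case PS: (P S); first by rewrite (PQ S SE PS).
by case: (Q S) => //; apply: w_ge0.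
Qed.

Lemma gnp_union (I : finType) (Q : I -> {set {set V}} -> bool) :
  gnp_prob E p (fun S => [exists i, Q i S]) <= \sum_i gnp_prob E p (Q i).
Proof.
rewrite /gnp_prob big_mkcond /=.
under [X in _ <= X]eq_bigr do rewrite big_mkcond /=.
rewrite [X in _ <= X](exchange_big).
apply: ler_sum => S _.
case SE: (S \subset E) => /=; last by rewrite big1.
case: existsP => [[i Qi]|_]; last by apply: sumr_ge0 => i _; case: (Q i S) => //; apply: w_ge0.
rewrite (bigD1 i) //= Qi lerDl.
by apply: sumr_ge0 => j _; case: (Q j S) => //; apply: w_ge0.
Qed.
End Gnp.

Lemma ex_in k (i : 'I_k) : ex i \in resE k.
Proof. by rewrite inE; apply/existsP; exists (inl true); apply/existsP; exists (inr (i, false, zo i)); rewrite /res_adj /= eqxx. Qed.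
Lemma ey_in k (i : 'I_k) : ey i \in resE k.
Proof. by rewrite inE; apply/existsP; exists (inl false); apply/existsP; exists (inr (i, true, zo i)); rewrite /res_adj /= eqxx. Qed.

Lemma pm_bound (R : realType) k (p : R) : 0 <= p <= 1 ->
  gnp_prob (resE k) p (@has_perfect_matching (resV k)) <= k%:R * p ^+ 2.
Proof.
move=> p01.
apply: le_trans (gnp_mono p01 (Q := fun S => [exists i : 'I_k, (ex i \in S) && (ey i \in S)]) _) _.
  by move=> S SE H; apply/existsP; apply: pm_edges.
apply: le_trans (gnp_union (resE k) p01 (fun (i : 'I_k) S => (ex i \in S) && (ey i \in S))) _.
have -> : k%:R * p ^+ 2 = \sum_(i < k) p ^+ 2 by rewrite sumr_const card_ord mulr_natl.
apply: ler_sum => i _.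
apply: le_trans (gnp_mono p01 (Q := fun S => ([set ex i; ey i] \subset S) && [disjoint S & finset.set0]) _) _.
  move=> S _ /andP [h1 h2]; apply/andP; split.
    by apply/fintype.subsetP => e; rewrite in_set2 => /orP [] /eqP ->.
  by rewrite -finset.setI_eq0 finset.setI0.
rewrite /gnp_prob gnpAB //.
- rewrite cards0 expr0 mulr1 cards2.
  have -> : ex i != ey i.
    apply/negP => /eqP h.
    have : (inl true : resV k) \in ey i by rewrite -h /ex set21.
    by rewrite /ey in_set2 eq_ll eq_lr.
  by [].
- by apply/fintype.subsetP => e; rewrite in_set2 => /orP [] /eqP ->; rewrite ?ex_in ?ey_in.
- by apply/fintype.subsetP => e; rewrite inE.
- by rewrite -finset.setI_eq0 finset.setI0.
Qed.

Lemma iso_bound (R : realType) k (p : R) : 0 <= p <= 1 ->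
  gnp_prob (resE k) p (@has_isolated_vertex (resV k)) <= (resN k)%:R * (1 - p) ^+ k.
Proof.
move=> p01.
apply: le_trans (gnp_mono p01 (Q := fun S => [exists v : resV k, [forall e in S, v \notin e]]) _) _.
  by [].
apply: le_trans (gnp_union (resE k) p01 (fun (v : resV k) (S : {set {set resV k}}) => [forall e in S, v \notin e])) _.
have -> : resN k = #|resV k|.
  by rewrite /resN card_sum card_prod card_prod card_bool !card_ord; lia.
have -> : #|resV k|%:R * (1 - p) ^+ k = \sum_(v : resV k) (1 - p) ^+ k by rewrite sumr_const mulr_natl.
apply: ler_sum => v _.
apply: le_trans (gnp_mono p01 (Q := fun S => (finset.set0 \subset S) && [disjoint S & Bv v]) _) _.
  by move=> S _ h; rewrite finset.sub0set iso_disj.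
rewrite /gnp_prob gnpAB ?finset.sub0set ?Bv_sub ?cards0 ?Bv_card ?expr0 ?mul1r //.
by rewrite -finset.setI_eq0 finset.set0I.
Qed.

Lemma bound1 (R : realType) k (p : R) : 0 <= p ->
  k%:R * p ^+ 2 <= (p * (resN k)%:R `^ (4%:R)^-1) * (p * (resN k)%:R `^ (4%:R)^-1).
Proof.
move=> p0.
set q := _ `^ _.
have q0 : 0 <= q := powR_ge0 _ _.
have q4 : q ^+ 4 = (resN k)%:R.
  by rewrite /q -powR_mulrn ?powR_ge0 // -powRrM mulVf ?pnatr_eq0 // powRr1 // ler0n.
have kq : k%:R <= q ^+ 2.
  rewrite -(@ler_pXn2r _ 2) ?nnegrE ?exprn_ge0 ?ler0n // -exprM q4 -natrX ler_nat /resN; lia.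
have -> : (p * q) * (p * q) = q ^+ 2 * p ^+ 2 by ring.
by rewrite ler_wpM2r // exprn_ge0.
Qed.

Lemma bound2 (R : realType) k (p : R) : (1 <= k)%N -> 0 <= p <= 1 ->
  4 <= p * Num.sqrt ((resN k)%:R) / ln ((resN k)%:R) ->
  (resN k)%:R * (1 - p) ^+ k <= (k.+1%:R)^-1.
Proof.
move=> k1 /andP [p0 p1] H.
set n : R := (resN k)%:R.
have n1 : 1 < n by rewrite /n ltr1n /resN; lia.
have n0 : 0 < n by apply: lt_trans n1.
have ln0 : 0 < ln n := ln_gt0 n1.
have h1 : 4 * ln n <= p * Num.sqrt n by rewrite -ler_pdivlMr.
have sq : Num.sqrt n <= 2 * k%:R.
  have k0 : 0 <= 2 * k%:R :> R by rewrite mulr_ge0 ?ler0n.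
  rewrite -(ger0_norm k0) -sqrtr_sqr; apply: ler_wsqrtr.
  by rewrite /n -natrM -natrX ler_nat /resN; lia.
have kp : 2 * ln n <= k%:R * p.
  have := ler_wpM2l p0 sq; nra.
have e1 : (1 - p) ^+ k <= expR (- (k%:R * p)).
  rewrite -mulrN expRM_natl; apply: lerXn2r; rewrite ?nnegrE ?subr_ge0 ?expR_ge0 //.
  by have := expR_ge1Dx (- p).
have e2 : expR (- (k%:R * p)) <= expR (- (2 * ln n)) by rewrite ler_expR lerN2.
have e3 : expR (- (2 * ln n)) = (n ^+ 2)^-1.
  by rewrite expRN expRM_natl lnK // posrE.
apply: le_trans (_ : n * (n ^+ 2)^-1 <= _).
  by apply: ler_wpM2l; [exact: ltW | rewrite -e3; apply: le_trans e1 e2].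
rewrite expr2 invfM mulrA mulfV ?mul1r ?gt_eqF //.
rewrite lef_pV2 ?posrE ?ltr0n //; last by rewrite /resN; lia.
by rewrite /n ler_nat /resN !expnS expn0; nia.
Qed.

Unset Implicit Arguments.
Local Open Scope classical_set_scope.
Local Open Scope ring_scope.

Theorem propositionA2 (R : realType) :
  (forall p : nat -> R, (forall k, 0 <= p k <= 1) ->
     (fun k => p k * ((resN k)%:R `^ (4%:R)^-1)) @ \oo --> 0 ->
     (fun k => gnp_prob (resE k) (p k) (@has_perfect_matching (resV k)))
       @ \oo --> 0)
  /\
  (forall p : nat -> R, (forall k, 0 <= p k <= 1) ->
     (fun k => p k * Num.sqrt ((resN k)%:R) / ln ((resN k)%:R)) @ \oo --> +oo ->
     (fun k => gnp_prob (resE k) (p k) (@has_isolated_vertex (resV k)))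
       @ \oo --> 0).
Proof.
split.
  move=> p p01 hp.
  apply: (@squeeze_cvgr _ _ _ _ (fun=> 0) (fun k => (p k * (resN k)%:R `^ (4%:R)^-1) * (p k * (resN k)%:R `^ (4%:R)^-1))).
  - apply: filterE => k; rewrite gnp_ge0 //=.
    apply: le_trans (pm_bound _ (p01 k)) _.
    by apply: bound1; case/andP: (p01 k).
  - exact: (@cvg_cst _ 0 nat _ _).
  - by rewrite -(mulr0 0); apply: cvgM.
move=> p p01 hp.
apply: (@squeeze_cvgr _ _ _ _ (fun=> 0) harmonic).
- have H4 := proj1 (cvgryPge _) hp 4.
  near=> k.
  have k1 : (1 <= k)%N by near: k; exact: nbhs_infty_ge.
  have h4 : 4 <= p k * Num.sqrt ((resN k)%:R) / ln ((resN k)%:R) by near: k; exact: H4.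
  rewrite gnp_ge0 //=.
  apply: le_trans (iso_bound _ (p01 k)) _.
  exact: bound2.
- exact: (@cvg_cst _ 0 nat _ _).
- exact: cvg_harmonic.
Unshelve. all: end_near.
Qed.
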